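(* Let $k\ge 2$ be a non-square integer, let $0=t_0<t_1<t_2<\cdots$ be the increasing enumeration of all nonnegative integers $t$ such that $kT_t$ is triangular, and let $r$ be the rank and $\kappa=t_{r-1}+t_r$ as in Theorem 1 (so that $t_n=2(\kappa+1)t_{n-r}-t_{n-2r}+\kappa$ for all $n\ge 2r$). Then for every integer $n\ge r$, $$\kappa\left(t_n+2t_nt_{n-r}+t_{n-r}\right)-\left(t_n-t_{n-r}\right)^2=t_rt_{r-1}.$$
   Context: $T_m=\frac{m(m+1)}{2}$ denotes the $m$-th triangular number; an integer is triangular if it equals $T_m$ for some integer $m\ge0$. Theorem 1 (referenced): for non-square $k\ge2$ there is a positive integer $r$ such that with $\kappa=t_{r-1}+t_r$ one has $\kappa=\xi_r-\xi_{r-1}-1$ (where $\xi_n\ge0$ satisfies $T_{\xi_n}=kT_{t_n}$), $(t_{2r}-t_{r-1})/t_r=2\kappa+3$, and $t_n=2(\kappa+1)t_{n-r}-t_{n-2r}+\kappa$ for all $n\ge 2r$. *)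

(* Defs.v *)
From mathcomp Require Import all_boot all_order all_algebra.
Set Implicit Arguments. Unset Strict Implicit. Unset Printing Implicit Defensive.

Definition T (m : nat) : nat := (m * m.+1) %/ 2.

Definition triangular (x : nat) : Prop := exists m : nat, x = T m.

Definition is_square (k : nat) : Prop := exists m : nat, k = m ^ 2.

(* Main.v *)
Require Import Defs.
From mathcomp Require Import all_boot all_order all_algebra.
From mathcomp Require Import zify ring lra.
Import Order.TTheory GRing.Theory Num.Theory.
Local Open Scope ring_scope.

Lemma T2 m : (2 * T m = m * m.+1)%N.
Proof.
rewrite /T; have : (2 %| m * m.+1)%N.
  by rewrite dvdn2 oddM /= andbN.
move/dvdnP=> [q ->]; rewrite mulnK //; lia.
Qed.

Lemma Teq (k a b : nat) : (T a = k * T b)%N <->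
  ((2 * a + 1)%:Z ^+ 2 = k%:Z * (2 * b + 1)%:Z ^+ 2 + 1 - k%:Z).
Proof.
have ha := T2 a; have hb := T2 b.
split=> H.
  rewrite H in ha. lia.
nia.
Qed.

Lemma Tlt a b : (a < b)%N -> (T a < T b)%N.
Proof. move=> h; have := T2 a; have := T2 b; nia. Qed.

Lemma mono_sol (k a1 b1 a2 b2 : nat) : (1 <= k)%N ->
  (T a1 = k * T b1)%N -> (T a2 = k * T b2)%N -> (b1 <= b2)%N -> (a1 <= a2)%N.
Proof.
move=> hk h1 h2 hb; rewrite leqNgt; apply/negP => ha.
have := Tlt _ _ ha; rewrite h1 h2.
have : (T b1 <= T b2)%N.
  by case: (ltngtP b1 b2) hb => // [/(Tlt _ _) /ltnW | ->].
nia.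
Qed.

Lemma incr_le {t : nat -> nat} : (forall n, (t n < t n.+1)%N) ->
  forall m n, (m <= n)%N -> (t m <= t n)%N.
Proof.
move=> h m n /subnK <-; elim: (n - m)%N => [|d IH] //.
by rewrite addSn; apply: leq_trans IH (ltnW (h _)).
Qed.

Lemma incr_lt {t : nat -> nat} : (forall n, (t n < t n.+1)%N) ->
  forall m n, (t m < t n)%N -> (m < n)%N.
Proof.
move=> h m n; rewrite ltnNge; apply: contraNT; rewrite -leqNgt.
exact: incr_le.
Qed.

Lemma pell_fwd (k c s X Y : int) : c^+2 - k*s^+2 = 1 -> X^+2 = k*Y^+2+1-k ->
  (c*X+k*s*Y)^+2 = k*(s*X+c*Y)^+2+1-k.
Proof.
move=> hu hx.
have h : (c*X + k*s*Y)^+2 - k*(s*X+c*Y)^+2 = (c^+2 - k*s^+2)*(X^+2 - k*Y^+2) by ring.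
rewrite hu mul1r hx in h.
transitivity ((c*X+k*s*Y)^+2 - k*(s*X+c*Y)^+2 + k*(s*X+c*Y)^+2); first by ring.
rewrite h; ring.
Qed.

Lemma pell_bwd (k c s X Y : int) : c^+2 - k*s^+2 = 1 -> X^+2 = k*Y^+2+1-k ->
  (c*X-k*s*Y)^+2 = k*(c*Y-s*X)^+2+1-k.
Proof.
move=> hu hx.
have h : (c*X - k*s*Y)^+2 - k*(c*Y-s*X)^+2 = (c^+2 - k*s^+2)*(X^+2 - k*Y^+2) by ring.
rewrite hu mul1r hx in h.
transitivity ((c*X-k*s*Y)^+2 - k*(c*Y-s*X)^+2 + k*(c*Y-s*X)^+2); first by ring.
rewrite h; ring.
Qed.

Lemma lin1 (c s K A B x : int) : 2*x+1 = c + K*s ->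
  2*(c*A + K*s*B + x) + 1 = c*(2*A+1) + K*s*(2*B+1).
Proof.
move=> h; transitivity (c*(2*A+1) + K*s*(2*B+1) + (2*x+1 - (c+K*s))); first ring.
rewrite h; ring.
Qed.

Lemma lin2 (c s A B x : int) : 2*x+1 = s + c ->
  2*(s*A + c*B + x) + 1 = s*(2*A+1) + c*(2*B+1).
Proof.
move=> h; transitivity (s*(2*A+1) + c*(2*B+1) + (2*x+1 - (s+c))); first ring.
rewrite h; ring.
Qed.

Lemma posA (k c s X Y : int) : 0 < k -> 0 < c -> 0 < s -> 0 < X -> c < Y ->
  c^+2 - k*s^+2 = 1 -> X^+2 = k*Y^+2+1-k -> 0 < c*X - k*s*Y.
Proof.
move=> hk hc hs hX hY hu hx.
have e : (c*X - k*s*Y) * (c*X + k*s*Y) = k*(Y^+2 - c^+2) + c^+2.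
  transitivity (c^+2 * (X^+2 - (k*Y^+2+1-k)) + k*Y^+2*(c^+2 - k*s^+2 - 1)
     + (k*(Y^+2 - c^+2) + c^+2)); first ring.
  by rewrite hx hu !subrr; ring.
have hY0 : 0 < Y := lt_trans hc hY.
have hD : 0 < c*X + k*s*Y by apply: ltr_pDl; rewrite ?mulr_gt0.
have hR : 0 < k*(Y^+2 - c^+2) + c^+2.
  apply: ltr_wpDl; last by rewrite exprn_gt0.
  apply: mulr_ge0; first exact: ltW.
  rewrite (_ : Y^+2 - c^+2 = (Y-c)*(Y+c)); last ring.
  by apply: mulr_ge0; rewrite ?subr_ge0 ltW // ltr_pDl.
by rewrite -(pmulr_lgt0 _ hD) e.
Qed.

Lemma posB (k c s X Y : int) : 1 <= k -> 0 < Y ->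
  c^+2 - k*s^+2 = 1 -> X^+2 = k*Y^+2+1-k -> 0 < c -> 0 < s -> 0 < X -> 0 < c*Y - s*X.
Proof.
move=> hk hY hu hx hc hs hX.
have e : (c*Y - s*X) * (c*Y + s*X) = Y^+2 + s^+2*(k-1).
  transitivity (- s^+2 * (X^+2 - (k*Y^+2+1-k)) + Y^+2*(c^+2 - k*s^+2 - 1)
     + (Y^+2 + s^+2*(k-1))); first ring.
  by rewrite hx hu !subrr; ring.
have hD : 0 < c*Y + s*X by apply: ltr_pDl; rewrite ?mulr_gt0.
have hR : 0 < Y^+2 + s^+2*(k-1).
  apply: ltr_pwDl; first by rewrite exprn_gt0.
  by apply: mulr_ge0; rewrite ?exprn_ge0 ?subr_ge0 // ltW.
by rewrite -(pmulr_lgt0 _ hD) e.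
Qed.

Theorem lemma2 (k : nat) (t xi : nat -> nat) (r : nat) :
  (2 <= k)%N -> ~ is_square k ->
  (* t is the increasing enumeration of {t >= 0 | k T_t is triangular} *)
  (forall n, (t n < t n.+1)%N) ->
  (forall x, triangular (k * T x) <-> exists n, t n = x) ->
  (* xi_n >= 0 with T_{xi_n} = k T_{t_n} *)
  (forall n, T (xi n) = (k * T (t n))%N) ->
  (* r is the rank of Theorem 1, kappa = t_{r-1} + t_r *)
  (0 < r)%N ->
  let kappa : int := (t r.-1)%:Z + (t r)%:Z in
  kappa = (xi r)%:Z - (xi r.-1)%:Z - 1 ->
  (t (2 * r)%N)%:Z - (t r.-1)%:Z = (2 * kappa + 3) * (t r)%:Z ->
  (forall n, (2 * r <= n)%N ->
     (t n)%:Z = 2 * (kappa + 1) * (t (n - r)%N)%:Z - (t (n - 2 * r)%N)%:Z + kappa) ->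
  forall n, (r <= n)%N ->
    kappa * ((t n)%:Z + 2 * (t n)%:Z * (t (n - r)%N)%:Z + (t (n - r)%N)%:Z)
      - ((t n)%:Z - (t (n - r)%N)%:Z) ^+ 2
    = (t r)%:Z * (t r.-1)%:Z.
Proof.
move=> Hk _ Hinc Hchar Hxi Hr kappa Hkap _ _ n Hn.
rewrite /kappa in Hkap *; clear kappa.
have t0 : t 0%N = 0%N.
  have [j hj] : exists j, t j = 0%N.
    by apply/Hchar; exists 0%N; rewrite /T /= muln0.
  by have := incr_le Hinc 0%N j (leq0n j); rewrite hj leqn0 => /eqP.
have xi0 : xi 0%N = 0%N.
  have := T2 (xi 0%N); rewrite Hxi t0 (_ : T 0 = 0%N) //; nia.
have Hrp : r = r.-1.+1 by rewrite prednK.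
have Hlt : (t r.-1 < t r)%N by rewrite {2}Hrp.
set tr := t r in Hlt Hkap *; set tp := t r.-1 in Hlt Hkap *.
set xr := xi r in Hkap *; set xp := xi r.-1 in Hkap *.
have hr : (2 * xr + 1)%:Z ^+ 2 = k%:Z * (2 * tr + 1)%:Z ^+ 2 + 1 - k%:Z by have /Teq := Hxi r.
have hp : (2 * xp + 1)%:Z ^+ 2 = k%:Z * (2 * tp + 1)%:Z ^+ 2 + 1 - k%:Z by have /Teq := Hxi r.-1.
have exr : (xr = xp + tr + tp + 1)%N by lia.
have Hsum : (xr + xp + 1)%:Z = k%:Z * (tr%:Z - tp%:Z).
  have h0 : (tr + tp + 1)%:Z * ((xr + xp + 1)%:Z - k%:Z * (tr%:Z - tp%:Z)) = 0.
    rewrite exr in hr *; lia.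
  move/eqP: h0; rewrite mulf_eq0 => /orP[/eqP|]; first lia.
  by rewrite subr_eq0 => /eqP.
have Hunit : (tr + tp + 1)%:Z ^+ 2 - k%:Z * (tr%:Z - tp%:Z) ^+ 2 = 1.
  have h0 : (1 - k%:Z) * ((tr + tp + 1)%:Z ^+ 2 - k%:Z * (tr%:Z - tp%:Z) ^+ 2 - 1) = 0.
    have e : (2 * xr + 1)%:Z = (tr + tp + 1)%:Z + k%:Z * (tr%:Z - tp%:Z) by lia.
    move: hr; rewrite e; lia.
  move/eqP: h0; rewrite mulf_eq0 => /orP[/eqP|]; first lia.
  by rewrite subr_eq0 => /eqP.
have key : forall c s X Y : int,
   (c*X + k%:Z*s*Y)^+2 - k%:Z*(s*X+c*Y)^+2 = (c^+2 - k%:Z*s^+2)*(X^+2 - k%:Z*Y^+2).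
  by move=> *; ring.
have key2 : forall c s X Y : int,
   (c*X - k%:Z*s*Y)^+2 - k%:Z*(c*Y - s*X)^+2 = (c^+2 - k%:Z*s^+2)*(X^+2 - k%:Z*Y^+2).
  by move=> *; ring.
pose sN := (tr - tp)%N; pose cN := (tr + tp + 1)%N.
have esN : sN%:Z = tr%:Z - tp%:Z by rewrite /sN subzn // ltnW.
have ecN : cN%:Z = (tr + tp + 1)%:Z by [].
have ex2 : (2 * xr + 1)%:Z = (tr + tp + 1)%:Z + k%:Z * (tr%:Z - tp%:Z) by lia.
clearbody sN cN.
have ex2' : 2 * xr%:Z + 1 = (tr%:Z + tp%:Z + 1) + k%:Z * (tr%:Z - tp%:Z) by rewrite -ex2.
have etr : 2 * tr%:Z + 1 = (tr%:Z - tp%:Z) + (tr%:Z + tp%:Z + 1).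
  by ring.
rewrite !(PoszD, PoszM) in Hunit.
have fwd : forall a b, T a = (k * T b)%N ->
    T (cN*a + k*sN*b + xr) = (k * T (sN*a + cN*b + tr))%N.
  move=> a b /Teq hab; apply/Teq.
  rewrite !(PoszD, PoszM) esN ecN !(PoszD, PoszM) in hab *.
  rewrite (lin1 _ _ _ _ _ _ ex2') (lin2 _ _ _ _ _ etr).
  exact: pell_fwd.
have exp2 : 2 * xp%:Z + 1 = k%:Z * (tr%:Z - tp%:Z) - (tr%:Z + tp%:Z + 1) by clear -Hsum exr; lia.
have bwd : forall j, (r <= j)%N ->
    exists a b, T a = (k * T b)%N /\ t j = (sN*a + cN*b + tr)%N.
  move=> j hj.
  have hle : (tr <= t j)%N := incr_le Hinc _ _ hj.
  pose X : int := 2 * (xi j)%:Z + 1; pose Y : int := 2 * (t j)%:Z + 1.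
  pose c : int := tr%:Z + tp%:Z + 1; pose s : int := tr%:Z - tp%:Z.
  have hx : X^+2 = k%:Z*Y^+2+1-k%:Z.
    by have /Teq := Hxi j; rewrite !(PoszD,PoszM).
  have hu : c^+2 - k%:Z*s^+2 = 1 by exact: Hunit.
  have hc : 0 < c by rewrite /c; clear; lia.
  have hs : 0 < s by rewrite /s; clear -Hlt; lia.
  have hk0 : 0 < k%:Z by clear -Hk; lia.
  have hX : 0 < X by rewrite /X; clear; lia.
  have hY : c < Y by rewrite /Y /c; clear -Hlt hle; lia.
  have hA := posA _ _ _ _ _ hk0 hc hs hX hY hu hx.
  have hk1 : 1 <= k%:Z by clear -Hk; lia.
  have hB := posB _ _ _ _ _ hk1 (lt_trans hc hY) hu hx hc hs hX.
  have eA : c*X - k%:Z*s*Y = 2*(c*(xi j)%:Z - k%:Z*s*(t j)%:Z - xp%:Z - 1) + 1.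
    transitivity (2*(c*(xi j)%:Z - k%:Z*s*(t j)%:Z - xp%:Z - 1) + 1
       + ((2*xp%:Z+1) - (k%:Z*s - c))); first by rewrite /X /Y; ring.
    by rewrite exp2 /s /c; ring.
  have eB : c*Y - s*X = 2*(c*(t j)%:Z - s*(xi j)%:Z + tp%:Z) + 1.
    by rewrite /X /Y /c /s; ring.
  have [an ean] : exists an : nat, (2*an+1)%N%:Z = c*X - k%:Z*s*Y.
    set al := c*(xi j)%:Z - k%:Z*s*(t j)%:Z - xp%:Z - 1 in eA.
    have al0 : 0 <= al by move: hA; rewrite eA => h; clear -h; lia.
    by exists `|al|%N; rewrite eA !(PoszD,PoszM) gez0_abs.
  have [bn ebn] : exists bn : nat, (2*bn+1)%N%:Z = c*Y - s*X.
    set al := c*(t j)%:Z - s*(xi j)%:Z + tp%:Z in eB.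
    have al0 : 0 <= al by move: hB; rewrite eB => h; clear -h; lia.
    by exists `|al|%N; rewrite eB !(PoszD,PoszM) gez0_abs.
  exists an, bn; split.
    by apply/Teq; rewrite ean ebn; exact: pell_bwd.
  have h2 : 2*(t j)%:Z + 1 = 2*(sN*an + cN*bn + tr)%N%:Z + 1.
    transitivity (s*(c*X - k%:Z*s*Y) + c*(c*Y - s*X)).
      transitivity (Y*(c^+2 - k%:Z*s^+2)); first by rewrite hu mulr1.
      ring.
    rewrite -ean -ebn !(PoszD,PoszM) esN ecN !(PoszD,PoszM) /s /c; ring.
  move: h2; move: (sN*an + cN*bn + tr)%N => m h; clear -h; lia.
have psi_mono : forall a1 b1 a2 b2, T a1 = (k * T b1)%N -> T a2 = (k * T b2)%N ->
    (b1 <= b2)%N -> (sN*a1 + cN*b1 + tr <= sN*a2 + cN*b2 + tr)%N.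
  move=> a1 b1 a2 b2 h1 h2 hb.
  have ha := mono_sol _ _ _ _ _ (ltnW Hk) h1 h2 hb.
  by rewrite leq_add2r; apply: leq_add; apply: leq_mul.
have psi_strict : forall a1 b1 a2 b2, T a1 = (k * T b1)%N -> T a2 = (k * T b2)%N ->
    (b1 < b2)%N -> (sN*a1 + cN*b1 + tr < sN*a2 + cN*b2 + tr)%N.
  move=> a1 b1 a2 b2 h1 h2 hb.
  have ha := mono_sol _ _ _ _ _ (ltnW Hk) h1 h2 (ltnW hb).
  have hc : (0 < cN)%N by case: ecN => ->; rewrite addn1.
  rewrite ltn_add2r; apply: (@leq_trans (sN * a2 + cN * b1).+1).
    by rewrite ltnS leq_add2r leq_mul.
  by rewrite -addnS leq_add2l ltn_pmul2l.
have key_ind : forall m, t (m + r)%N = (sN * xi m + cN * t m + tr)%N.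
  elim=> [|m IH]; first by rewrite add0n xi0 t0 !muln0.
  have hlt : (t (m + r)%N < sN * xi m.+1 + cN * t m.+1 + tr)%N.
    by rewrite IH; apply: psi_strict (Hxi m) (Hxi m.+1) (Hinc m).
  have [j hj] : exists j, t j = (sN * xi m.+1 + cN * t m.+1 + tr)%N.
    apply/Hchar; exists (cN * xi m.+1 + k * sN * t m.+1 + xr)%N.
    by rewrite fwd.
  have hge1 : (t (m.+1 + r)%N <= sN * xi m.+1 + cN * t m.+1 + tr)%N.
    rewrite -hj; apply: (incr_le Hinc); rewrite addSn.
    by apply: (incr_lt Hinc); rewrite hj.
  have hge2 : (sN * xi m.+1 + cN * t m.+1 + tr <= t (m.+1 + r)%N)%N.
    have [a [b [hab eab]]] := bwd (m.+1 + r)%N (leq_addl _ _).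
    have [i hi] : exists i, t i = b by apply/Hchar; exists a.
    have hbm : (t m < b)%N.
      rewrite ltnNge; apply/negP => hle.
      have := psi_mono _ _ _ _ hab (Hxi m) hle.
      by rewrite -IH -eab addSn leqNgt Hinc.
    rewrite eab; apply: psi_mono (Hxi m.+1) hab _.
    by rewrite -hi; apply: (incr_le Hinc); apply: (incr_lt Hinc); rewrite hi.
  by apply/eqP; rewrite eqn_leq hge1 hge2.
have etn := key_ind (n - r)%N; rewrite subnK // in etn.
rewrite etn.
have hx : (2 * (xi (n - r)%N) + 1)%N%:Z ^+ 2
          = k%:Z * (2 * (t (n - r)%N) + 1)%N%:Z ^+ 2 + 1 - k%:Z.
  by apply/Teq; exact: Hxi.
move: hx; rewrite !(PoszD, PoszM) esN ecN !(PoszD, PoszM) in Hunit *.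
move: (xi (n - r)%N) (t (n - r)%N) => a b hx.
have E1 : (2 * a%:Z + 1) ^+ 2 - (k%:Z * (2 * b%:Z + 1) ^+ 2 + 1 - k%:Z) = 0.
  by rewrite [X in X - _]hx subrr.
have E2 : (tr%:Z + tp%:Z + 1) ^+ 2 - k%:Z * (tr%:Z - tp%:Z) ^+ 2 - 1 = 0.
  by rewrite Hunit subrr.
apply: (@mulfI _ 4) => //.
transitivity (4 * (tr%:Z * tp%:Z)
   - (tr%:Z - tp%:Z) ^+ 2 * ((2 * a%:Z + 1) ^+ 2 - (k%:Z * (2 * b%:Z + 1) ^+ 2 + 1 - k%:Z))
   + ((2 * b%:Z + 1) ^+ 2 - 1) * ((tr%:Z + tp%:Z + 1) ^+ 2 - k%:Z * (tr%:Z - tp%:Z) ^+ 2 - 1)).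
  ring.
by rewrite E1 E2; ring.
Qed.
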